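(* Consider the four-player team game of dominoes described in the context. Over all possible deals and all possible legal games that end in a tranca, the largest number of points that the winning team can obtain is exactly $107$. That is, there exists a deal and a legal game ending in a tranca in which the winning team obtains $107$ points, and in every legal game ending in a tranca the winning team obtains at most $107$ points.
   Context: Domino tiles: the set of tiles consists of the 28 unordered pairs $[a,b]=[b,a]$ with $a,b\in\{0,1,\dots,6\}$; the number of points (pips) of $[a,b]$ is $a+b$. Four players, numbered 1 to 4, play; players 1 and 3 form one team and players 2 and 4 the other. The 28 tiles are dealt, 7 to each player (the initial hands). Players take turns in cyclic order $1,2,3,4,1,\dots$. The starting player places any one of their tiles on the table, forming a line of tiles (the board) with two open ends. On each subsequent turn, the player whose turn it is must, if they hold a tile containing a number equal to the number shown at one of the two open ends, place such a tile at that end (with equal numbers adjacent), the other number of the tile becoming the new open end; if they hold no such tile, they pass. A game ends either when a player places their last tile, or in a tranca (blocked game): a position in which no player holds a tile that can be placed. In a game ending in a tranca, the team whose two players' remaining tiles have the smaller total number of pips wins, and it obtains as points the total number of pips on the tiles remaining in the hands of the two players of the other (losing) team. *)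

(* Defs.v *)
From mathcomp Require Import all_boot.
Set Implicit Arguments. Unset Strict Implicit. Unset Printing Implicit Defensive.

(* A tile [a,b] = [b,a] with a,b in {0..6}, stored normalised with a <= b.
   This finType has exactly 28 elements. *)
Definition tile := {p : 'I_7 * 'I_7 | p.1 <= p.2}.
Definition tlo (t : tile) : 'I_7 := (val t).1.
Definition thi (t : tile) : 'I_7 := (val t).2.
Definition pips (t : tile) : nat := tlo t + thi t.

Definition has_num (t : tile) (v : 'I_7) : bool := (tlo t == v) || (thi t == v).
Definition other (t : tile) (v : 'I_7) : 'I_7 := if tlo t == v then thi t else tlo t.

(* Players 1,2,3,4 are represented by 0,1,2,3 : 'I_4.
   Teams: {1,3} = {0,2} (team false) and {2,4} = {1,3} (team true). *)
Definition team (p : 'I_4) : bool := odd p.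
Definition next (p : 'I_4) : 'I_4 := inord ((p.+1) %% 4).

(* A position: owner t = Some p if player p holds t, None if t is on the board;
   ends = the two open ends of the board (None if the board is empty);
   turn = player to move. *)
Record state := St {
  owner : {ffun tile -> option 'I_4};
  ends : option ('I_7 * 'I_7);
  turn : 'I_4 }.

Definition holds (s : state) (p : 'I_4) (t : tile) : bool := owner s t == Some p.

Definition placeable (s : state) (t : tile) : bool :=
  match ends s with
  | None => true
  | Some (l, r) => has_num t l || has_num t r
  end.

Definition can_play (s : state) (p : 'I_4) : bool :=
  [exists t, holds s p t && placeable s t].

Inductive move := Pass | Play of tile & bool. (* bool: true = left end, false = right end *)

Definition remove_tile (s : state) (t : tile) : {ffun tile -> option 'I_4} :=
  [ffun u => if u == t then None else owner s u].

Inductive step : state -> move -> state -> Prop :=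
| step_pass s :
    ~~ can_play s (turn s) ->
    step s Pass (St (owner s) (ends s) (next (turn s)))
| step_start s t side :
    ends s = None -> holds s (turn s) t ->
    step s (Play t side) (St (remove_tile s t) (Some (tlo t, thi t)) (next (turn s)))
| step_left s t l r :
    ends s = Some (l, r) -> holds s (turn s) t -> has_num t l ->
    step s (Play t true) (St (remove_tile s t) (Some (other t l, r)) (next (turn s)))
| step_right s t l r :
    ends s = Some (l, r) -> holds s (turn s) t -> has_num t r ->
    step s (Play t false) (St (remove_tile s t) (Some (l, other t r)) (next (turn s))).

Definition someone_out (s : state) : Prop := exists p : 'I_4, forall t, ~~ holds s p t.
Definition blocked (s : state) : Prop := forall p : 'I_4, ~~ can_play s p.
Definition game_over (s : state) : Prop := someone_out s \/ blocked s.

Inductive run : state -> seq move -> state -> Prop :=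
| run_nil s : run s [::] s
| run_cons s m s1 ms s2 :
    ~ game_over s -> step s m s1 -> run s1 ms s2 -> run s (m :: ms) s2.

Definition is_deal (d : {ffun tile -> 'I_4}) : Prop :=
  forall p : 'I_4, #|[set t | d t == p]| = 7.

Definition init (d : {ffun tile -> 'I_4}) : state :=
  St [ffun t => Some (d t)] None ord0.

Definition ends_in_tranca (s : state) : Prop := blocked s /\ ~ someone_out s.

Definition team_pips (s : state) (k : bool) : nat :=
  \sum_(t : tile | if owner s t is Some p then team p == k else false) pips t.

(* Points of the winning team in a tranca: the losing team's remaining pips.
   None if the totals are equal (no winning team). *)
Definition winner_points (s : state) : option nat :=
  let a := team_pips s false in
  let b := team_pips s true in
  if a < b then Some b else if b < a then Some a else None.

(* Main.v *)
Require Import Defs.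
From mathcomp Require Import all_boot.
From mathcomp Require Import zify.
Set Implicit Arguments. Unset Strict Implicit. Unset Printing Implicit Defensive.

Definition tl : seq (nat * nat) := [seq (a, b) | a <- iota 0 7, b <- iota a (7 - a)].
Definition tv (t : tile) : nat * nat := (nat_of_ord (tlo t), nat_of_ord (thi t)).

Lemma tv_inj : injective tv.
Proof.
move=> [[a b] Hab] [[c d] Hcd] [E1 E2].
apply: val_inj => /=. by congr pair; apply: val_inj.
Qed.

Lemma mem_tl p : (p \in tl) = (p.1 <= p.2) && (p.2 < 7).
Proof.
apply/allpairsPdep/andP.
- move=> [a [b [Ha Hb ->]]] /=. move: Ha Hb; rewrite !mem_iota; lia.
- case: p => a b /= [H1 H2]; exists a, b; split; rewrite ?mem_iota //; [rewrite -[[:: 0; 1; 2; 3; 4; 5; 6]]/(iota 0 7) mem_iota|]; lia.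
Qed.

Lemma tv_in_tl t : tv t \in tl.
Proof. rewrite mem_tl /tv /=. case: t => [[a b] H] /=. by rewrite H ltn_ord. Qed.

Lemma tile_exists a b : a <= b -> b < 7 -> exists t, tv t = (a, b).
Proof.
move=> Hab Hb.
have Ha : a < 7 by lia.
have H : (Ordinal Ha, Ordinal Hb).1 <= (Ordinal Ha, Ordinal Hb).2 by [].
by exists (exist _ (Ordinal Ha, Ordinal Hb) H).
Qed.

Lemma perm_tiles : perm_eq (map tv (index_enum tile)) tl.
Proof.
apply: uniq_perm.
- rewrite map_inj_uniq ?index_enum_uniq //; exact: tv_inj.
- by vm_compute.
- move=> p; apply/mapP/idP.
  + by move=> [t _ ->]; exact: tv_in_tl.
  + case: p => a b; rewrite mem_tl /= => /andP[H1 H2].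
    have [t Ht] := tile_exists H1 H2. by exists t; rewrite ?mem_index_enum.
Qed.

Fixpoint lsum (s : seq (nat * nat)) (F : nat * nat -> nat) : nat :=
  if s is p :: s' then F p + lsum s' F else 0.

Lemma lsum_big s F : lsum s F = \sum_(p <- s) F p.
Proof. elim: s => [|p s IH] /=; by rewrite ?big_nil ?big_cons ?IH. Qed.

Lemma sum_tiles (F : nat * nat -> nat) : \sum_(t : tile) F (tv t) = lsum tl F.
Proof.
by rewrite lsum_big -(perm_big _ perm_tiles) big_map.
Qed.

Lemma forall_tiles (P : nat * nat -> Prop) : (forall p, p \in tl -> P p) -> forall t, P (tv t).
Proof. move=> H t; apply: H; exact: tv_in_tl. Qed.

Definition cls (c : nat -> nat) (k : nat) (p : nat*nat) : bool :=
  match k with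
  | 0 => [&& (c p.1 == 1) || (c p.1 == 3), (c p.2 == 1) || (c p.2 == 3) & ~~ ((c p.1 == 3) && (c p.2 == 3))]
  | 1 => [&& (c p.1 == 2) || (c p.1 == 3), (c p.2 == 2) || (c p.2 == 3) & ~~ ((c p.1 == 3) && (c p.2 == 3))]
  | _ => [&& c p.1 == 3, c p.2 == 3 & p.1 == p.2]
  end.
Definition Lc c k := [seq p.1 + p.2 | p <- tl & cls c k p].
Definition gL (L : seq nat) th := sumn [seq x - th | x <- L].
Definition thn (L : seq nat) n := nth 0 (sort geq L) n.-1.
Definition fbv L n := n * thn L n + gL L (thn L n).
Definition check_l (l : seq nat) : bool :=
  let c := nth 0 l in
  (count (eq_op 0) l == 1) ==>
  let N := 13 + (3 \notin l) in
  let LA := Lc c 0 in let LB := Lc c 1 in let LC := Lc c 2 in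
  let FA := [seq fbv LA n | n <- iota 0 8] in
  let FB := [seq fbv LB n | n <- iota 0 8] in
  all (fun na => all (fun nb => (na + nb <= N) ==> (nth 0 FA na + nth 0 FB nb + fbv LC (N - na - nb) <= 107)) (iota 0 8)) (iota 0 8).
Fixpoint gen n : seq (seq nat) := if n is n'.+1 then [seq i :: l | i <- iota 0 4, l <- gen n'] else [:: [::]].
Lemma check_all : all check_l (gen 7).
Proof. vm_compute. reflexivity. Qed.

Arguments cls : simpl never.
Lemma pips_tv t : pips t = (tv t).1 + (tv t).2.
Proof. by []. Qed.

Lemma lsum_filter (s : seq (nat*nat)) (P : pred (nat*nat)) (f : nat*nat -> nat) th :
  lsum s (fun p => if P p then f p - th else 0) = sumn [seq x - th | x <- [seq f p | p <- s & P p]].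
Proof. elim: s => [|p s IH] //=. by case: (P p) => /=; rewrite IH. Qed.

Lemma gL_tiles c k th :
  \sum_(t : tile) (if cls c k (tv t) then pips t - th else 0) = gL (Lc c k) th.
Proof.
rewrite /gL /Lc -lsum_filter -(sum_tiles (fun p => if cls c k p then p.1 + p.2 - th else 0)).
by [].
Qed.

Lemma thresh (H : {set tile}) (P : pred (nat*nat)) th :
  \sum_(t in H | P (tv t)) pips t <=
  (\sum_(t in H | P (tv t)) 1) * th + \sum_(t : tile) (if P (tv t) then pips t - th else 0).
Proof.
rewrite big_distrl /=.
apply: leq_trans (_ : \sum_(t in H | P (tv t)) (1 * th + (pips t - th)) <= _).
  by apply: leq_sum => t _; rewrite mul1n; lia.
rewrite big_split /= leq_add2l.
rewrite big_mkcond [X in _ <= X]big_mkcond /=.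
apply: leq_sum => t _. case: (t \in H) => //=; by case: (P (tv t)).
Qed.

Lemma cls_cases c p :
  (cls c 0 p ==> ~~ cls c 1 p && ~~ cls c 2 p) && (cls c 1 p ==> ~~ cls c 2 p).
Proof.
rewrite /cls. case: (c p.1) => [|[|[|[|n1]]]]; case: (c p.2) => [|[|[|[|n2]]]] //=;
  by rewrite ?andbF ?andbT.
Qed.

Lemma gen_mem l : all (fun i => i < 4) l -> l \in gen (size l).
Proof.
elim: l => [|i l IH]; first by [].
move=> /andP[Hi Hl].
change (i :: l \in [seq x :: y | x <- iota 0 4, y <- gen (size l)]).
apply/allpairsPdep. exists i, l. split => //; [rewrite mem_iota; lia | exact: IH].
Qed.

Lemma nth_fbv L n m : n < m -> nth 0 [seq fbv L k | k <- iota 0 m] n = fbv L n.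
Proof. move=> Hn. by rewrite (nth_map 0) ?size_iota // nth_iota. Qed.

Lemma combo (l : seq nat) (Ha Hb : {set tile}) :
  size l = 7 -> all (fun i => i < 4) l -> count (eq_op 0) l = 1 ->
  [disjoint Ha & Hb] ->
  (forall t, t \in Ha -> cls (nth 0 l) 0 (tv t) || cls (nth 0 l) 2 (tv t)) ->
  (forall t, t \in Hb -> cls (nth 0 l) 1 (tv t) || cls (nth 0 l) 2 (tv t)) ->
  #|Ha| <= 7 -> #|Hb| <= 7 -> #|Ha| + #|Hb| <= 13 + (3 \notin l) ->
  \sum_(t in Ha :|: Hb) pips t <= 107.
Proof.
move=> Hsz Hall Hcnt Hdis HA HB HaS HbS Htot.
have Hchk : check_l l by apply: (allP check_all); rewrite -Hsz; apply: gen_mem.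
move: Hchk; rewrite /check_l Hcnt eqxx implyTb; cbv zeta.
set c := nth 0 l. set N := 13 + _.
set H := Ha :|: Hb.
have Hcl : forall t, t \in H -> [|| cls c 0 (tv t), cls c 1 (tv t) | cls c 2 (tv t)].
  move=> t; rewrite inE => /orP[/HA|/HB]; by case/orP=> ->; rewrite ?orbT.
have Hex := cls_cases c.
have split3 : forall F : tile -> nat, \sum_(t in H) F t =
   \sum_(t in H | cls c 0 (tv t)) F t + \sum_(t in H | cls c 1 (tv t)) F t + \sum_(t in H | cls c 2 (tv t)) F t.
  move=> F. rewrite (bigID (fun t => cls c 0 (tv t))) /= -addnA. congr (_ + _).
  rewrite (bigID (fun t => cls c 1 (tv t))) /=. congr (_ + _); apply: eq_bigl => t.
  - move: (Hex (tv t)) (Hcl t).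
    move: (t \in H) (cls c 0 (tv t)) (cls c 1 (tv t)) (cls c 2 (tv t)) => h a b d.
    by case: h; case: a; case: b; case: d.
  - move: (Hex (tv t)) (Hcl t).
    move: (t \in H) (cls c 0 (tv t)) (cls c 1 (tv t)) (cls c 2 (tv t)) => h a b d.
    case: h; case: a; case: b; case: d => //=; by move=> _ /(_ isT).
set nA := \sum_(t in H | cls c 0 (tv t)) 1.
set nB := \sum_(t in H | cls c 1 (tv t)) 1.
set nC := \sum_(t in H | cls c 2 (tv t)) 1.
have HcardH : #|H| = #|Ha| + #|Hb|.
  by rewrite /H cardsU disjoint_setI0 // cards0 subn0.
have Hsum : nA + nB + nC = #|Ha| + #|Hb| by rewrite -HcardH -sum1_card split3.
have HnA : nA <= 7.
  apply: leq_trans HaS. rewrite -sum1_card /nA big_mkcond [X in _ <= X]big_mkcond /=.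
  apply: leq_sum => t _. case HtA: (t \in Ha); first by case: (_ && _).
  case HtH: (t \in H) => //=. move: HtH; rewrite inE HtA /= => /HB.
  move: (Hex (tv t)).
  move: (cls c 0 (tv t)) (cls c 1 (tv t)) (cls c 2 (tv t)) => a b d.
  by case: a; case: b; case: d.
have HnB : nB <= 7.
  apply: leq_trans HbS. rewrite -sum1_card /nB big_mkcond [X in _ <= X]big_mkcond /=.
  apply: leq_sum => t _. case HtB: (t \in Hb); first by case: (_ && _).
  case HtH: (t \in H) => //=. move: HtH; rewrite inE HtB orbF => /HA.
  move: (Hex (tv t)).
  move: (cls c 0 (tv t)) (cls c 1 (tv t)) (cls c 2 (tv t)) => a b d.
  by case: a; case: b; case: d.
have T0 : \sum_(t in H | cls c 0 (tv t)) pips t <= nA * thn (Lc c 0) nA + gL (Lc c 0) (thn (Lc c 0) nA).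
  by rewrite -gL_tiles; exact: thresh.
have T1 : \sum_(t in H | cls c 1 (tv t)) pips t <= nB * thn (Lc c 1) nB + gL (Lc c 1) (thn (Lc c 1) nB).
  by rewrite -gL_tiles; exact: thresh.
have T2 : forall th, \sum_(t in H | cls c 2 (tv t)) pips t <= nC * th + gL (Lc c 2) th.
  by move=> th; rewrite -gL_tiles; exact: thresh.
rewrite split3.
clearbody nA nB nC.
move/allP/(_ nA); rewrite mem_iota add0n ltnS HnA => /(_ isT).
move/allP/(_ nB); rewrite mem_iota add0n ltnS HnB => /(_ isT).
have HnAB : nA + nB <= N by apply: leq_trans (leq_addr nC _) _; rewrite Hsum.
move/implyP/(_ HnAB).
have HnA' : nA < 8 := HnA. have HnB' : nB < 8 := HnB.
have E1 : nth 0 [seq fbv (Lc c 0) n | n <- iota 0 8] nA = fbv (Lc c 0) nA := nth_fbv _ HnA'.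
have E2 : nth 0 [seq fbv (Lc c 1) n | n <- iota 0 8] nB = fbv (Lc c 1) nB := nth_fbv _ HnB'.
move=> Hfin.
apply: leq_trans Hfin.
apply: leq_add; first apply: leq_add.
- rewrite E1; exact: T0.
- rewrite E2; exact: T1.
- apply: leq_trans (T2 (thn (Lc c 2) (N - nA - nB))) _.
  rewrite /fbv leq_add2r. apply: leq_mul; [|exact: leqnn].
  rewrite -subnDA leq_subRL //. by rewrite Hsum.
Qed.

Lemma team_next p : team (Defs.next p) = ~~ team p.
Proof.
rewrite /team /Defs.next inordK; last by rewrite ltnS -ltnS ltn_pmod.
by case: p => [[|[|[|[|p]]]] Hp].
Qed.

Lemma removeE s t0 u : remove_tile s t0 u = if u == t0 then None else owner s u.
Proof. by rewrite ffunE. Qed.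

Lemma step_turn s m s1 : step s m s1 -> turn s1 = Defs.next (turn s).
Proof. by case. Qed.

Lemma step_back s m s1 t q : step s m s1 -> owner s1 t = Some q -> owner s t = Some q.
Proof.
case => [s' _ | s' t0 side _ _ | s' t0 l r _ _ _ | s' t0 l r _ _ _] /=; rewrite ?removeE //;
  by case: (t == t0).
Qed.

Lemma run_back s ms f t q : run s ms f -> owner f t = Some q -> owner s t = Some q.
Proof. elim => // s0 m s1 ms' s2 _ Hst _ IH H. exact: step_back Hst (IH H). Qed.

Lemma step_back_none s m s1 t : step s m s1 -> owner s t = None -> owner s1 t = None.
Proof.
case => [s' _ | s' t0 side _ _ | s' t0 l r _ _ _ | s' t0 l r _ _ _] /=; rewrite ?removeE //;
  by case: (t == t0).
Qed.

Definition mult (t : tile) (v : 'I_7) : nat := (tlo t == v) + (thi t == v).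
Definition endc (s : state) (v : 'I_7) : nat :=
  if ends s is Some (l, r) then (l == v) + (r == v) else 0.
Definition bsum (s : state) (F : tile -> nat) := \sum_(t | owner s t == None) F t.
Definition Par s := forall v, ~~ odd (bsum s (fun t => mult t v) + endc s v).

Lemma bsum_remove s t0 q F : owner s t0 = Some q ->
  \sum_(t | remove_tile s t0 t == None) F t = F t0 + bsum s F.
Proof.
move=> Ht0. rewrite (bigD1 t0) /=; last by rewrite removeE eqxx.
congr (_ + _). apply: eq_bigl => t. rewrite removeE.
case: (t =P t0) => [->|_] /=; by rewrite ?Ht0 ?andbT ?eqxx.
Qed.

Lemma mult_other t l v : has_num t l -> mult t v = (l == v) + (other t l == v).
Proof.
rewrite /has_num /mult /other.
case: eqP => [-> | _] /=; first by [].
by move/eqP => ->; rewrite addnC.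
Qed.

Lemma odd_add2 x a : odd (x + a * 2) = odd x.
Proof. by rewrite oddD oddM andbF addbF. Qed.

Lemma step_par s m s1 : step s m s1 -> Par s -> Par s1.
Proof.
case => [s' _ | s' t0 side Hn Hh | s' t0 l r He Hh Hl | s' t0 l r He Hh Hr] HP v; move: (HP v);
  rewrite /bsum /endc /= ?He ?Hn.
- by [].
- move/eqP: Hh => Hh. rewrite (bsum_remove _ Hh) /bsum /mult.
  set S := \sum_(t | _) _. set a := (tlo t0 == v) + (thi t0 == v).
  have -> : a + S + a = S + 0 + a * 2 by lia.
  by rewrite odd_add2.
- move/eqP: Hh => Hh. rewrite (bsum_remove _ Hh) /bsum (mult_other v Hl).
  set S := \sum_(t | _) _.
  have -> : (l == v) + (other t0 l == v) + S + ((other t0 l == v) + (r == v)) =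
            S + ((l == v) + (r == v)) + (other t0 l == v) * 2 by lia.
  by rewrite odd_add2.
- move/eqP: Hh => Hh. rewrite (bsum_remove _ Hh) /bsum (mult_other v Hr).
  set S := \sum_(t | _) _.
  have -> : (r == v) + (other t0 r == v) + S + ((l == v) + (other t0 r == v)) =
            S + ((l == v) + (r == v)) + (other t0 r == v) * 2 by lia.
  by rewrite odd_add2.
Qed.

Lemma run_par s ms f : run s ms f -> Par s -> Par f.
Proof. elim => // s0 m s1 ms' s2 _ Hst _ IH HP. apply: IH. exact: step_par Hst HP. Qed.

Lemma par_init d : Par (init d).
Proof.
move=> v. rewrite /bsum /endc /= big_pred0 // => t. by rewrite ffunE.
Qed.

Definition isK (K : bool) (o : option 'I_4) : bool := if o is Some q then team q == K else false.
Definition hko K (o : {ffun tile -> option 'I_4}) := #|[set t | isK K (o t)]|.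
Definition hk K s := hko K (owner s).
Definition inU f K (u : 'I_7) : bool :=
  [forall q : 'I_4, (team q == K) ==> [exists t, (owner f t == Some q) && has_num t u]].
Definition tU f K (t : tile) := inU f K (tlo t) || inU f K (thi t).
Definition bad f K s := if ends s is Some (l, r) then inU f K l || inU f K r else false.
Definition buo f K (o : {ffun tile -> option 'I_4}) := #|[set t | (o t == None) && tU f K t]|.
Definition BU f K s := buo f K (owner s).

Lemma hk_rem K s t0 q : owner s t0 = Some q ->
  hko K (owner s) = hko K (remove_tile s t0) + (team q == K).
Proof.
move=> Ht0. rewrite /hko (cardsD1 t0) inE Ht0 /= addnC. congr (_ + _).
apply: eq_card => t; rewrite !inE removeE.
case: (t =P t0) => [->|_] //=.
Qed.

Lemma bu_rem f K s t0 q : owner s t0 = Some q ->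
  buo f K (remove_tile s t0) = tU f K t0 + buo f K (owner s).
Proof.
move=> Ht0. rewrite /buo (cardsD1 t0) inE removeE eqxx /=. congr (_ + _).
apply: eq_card => t; rewrite !inE removeE.
case: (t =P t0) => [->|_] //=. by rewrite Ht0.
Qed.

Lemma bad_can f K s q : (forall t q, owner f t = Some q -> owner s t = Some q) ->
  bad f K s -> team q == K -> can_play s q.
Proof.
move=> Hb; rewrite /bad /can_play /placeable; case E: (ends s) => [[l r]|] //.
move=> /orP [Hu|Hu] HK; move/forallP: Hu => /(_ q); rewrite HK /= => /existsP [t /andP [/eqP Ht Hn]];
  apply/existsP; exists t; by rewrite /holds (Hb _ _ Ht) eqxx Hn ?orbT.
Qed.

Lemma K_player (K : bool) : exists q : 'I_4, team q == K.
Proof.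
exists (inord K). rewrite /team inordK; last by case: K.
by case: K.
Qed.

Lemma not_bad_final f K : blocked f -> ~~ bad f K f.
Proof.
move=> Hbl. apply/negP => Hb. have [q Hq] := K_player K.
move: (Hbl q) => /negP; apply. exact: bad_can Hb Hq.
Qed.

Lemma step_cases f K s m s1 : step s m s1 ->
  (owner s1 = owner s /\ ends s1 = ends s /\ ~~ can_play s (turn s))
  \/ exists t0, owner s t0 = Some (turn s) /\ owner s1 = remove_tile s t0 /\
        (~~ bad f K s -> bad f K s1 = tU f K t0).
Proof.
case => [s' Hc | s' t0 side Hn Hh | s' t0 l r He Hh Hl | s' t0 l r He Hh Hr].
- by left.
- right; exists t0; split; first exact/eqP. by [].
- right; exists t0; split; first exact/eqP. split => //.
  rewrite /bad /= He negb_or => /andP [/negbTE Hl' /negbTE Hr'].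
  rewrite Hr' orbF /tU. move: Hl; rewrite /has_num /other.
  case: (tlo t0 =P l) => [E _| _ /eqP Eh]; first by rewrite E Hl'.
  by rewrite -Eh in Hl'; rewrite Hl' orbF.
- right; exists t0; split; first exact/eqP. split => //.
  rewrite /bad /= He negb_or => /andP [/negbTE Hl' /negbTE Hr'].
  rewrite Hl' /tU. move: Hr; rewrite /has_num /other.
  case: (tlo t0 =P r) => [E _| _ /eqP Eh]; first by rewrite E Hr'.
  by rewrite -Eh in Hr'; rewrite Hr' orbF.
Qed.

Lemma negb_eqF (a b : bool) : (a == b) = false -> (~~ a == b).
Proof. by case: a; case: b. Qed.

Lemma L4 K : forall s ms f, run s ms f -> blocked f ->
  hk K f <= hk K s /\
  (hk K s = hk K f -> (bad f K s -> team (turn s) != K) /\ BU f K f <= BU f K s + bad f K s) /\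
  (hk K s = (hk K f).+1 ->
     BU f K f <= BU f K s + (if bad f K s then (if team (turn s) == K then 2 else 4) else 3)).
Proof.
move=> s ms f Hrun.
elim: Hrun => [s0 | s0 m s1 ms' s2 Hgo Hst Hrun IH] Hbl.
- rewrite (negbTE (not_bad_final K Hbl)). split; first done.
  split; first by move=> _; split => //; rewrite addn0.
  move=> E; lia.
- have [H1 [H2 H3]] := IH Hbl.
  have Hback : forall t q, owner s2 t = Some q -> owner s0 t = Some q.
    move=> t q H; exact: run_back (run_cons Hgo Hst Hrun) H.
  have Hteam : team (turn s1) = ~~ team (turn s0) by rewrite (step_turn Hst) team_next.
  case: (step_cases s2 K Hst) => [[Ho [He Hnc]] | [t0 [Ht0 [Ho Hbad]]]].
  + have Ehk : hk K s1 = hk K s0 by rewrite /hk Ho.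
    have EBU : BU s2 K s1 = BU s2 K s0 by rewrite /BU Ho.
    have Ebad : bad s2 K s1 = bad s2 K s0 by rewrite /bad He.
    have Hnk : bad s2 K s0 -> team (turn s0) != K.
      move=> Hb; apply/negP => HK; move/negP: Hnc; apply; exact: bad_can Hback Hb HK.
    rewrite Ehk EBU Ebad Hteam in H1 H2 H3.
    split => //. split.
    * by move=> E; have [_ Hb'] := H2 E; split.
    * move=> E. have := H3 E.
      case Hb0: (bad s2 K s0) => //.
      move: (Hnk Hb0) => /negbTE -> H; apply: leq_trans H _; rewrite leq_add2l; by case: ifP.
  + have Ehk : hk K s0 = hk K s1 + (team (turn s0) == K) by rewrite /hk Ho; exact: hk_rem Ht0.
    have EBU : BU s2 K s1 = tU s2 K t0 + BU s2 K s0 by rewrite /BU Ho; exact: bu_rem Ht0.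
    split; first by lia.
    case HK: (team (turn s0) == K); rewrite HK in Ehk.
    * split; first by lia.
      move=> E. have [_ Hb'] := H2 (ltac:(lia)).
      rewrite EBU in Hb'. case: (bad s2 K s0); move: Hb';
        case: (tU s2 K t0); case: (bad s2 K s1) => /=; lia.
    * have HK1 : team (turn s1) == K by rewrite Hteam; exact: negb_eqF.
      split.
      - move=> E. have [Ha Hb'] := H2 (ltac:(lia)).
        have nb1 : bad s2 K s1 = false by apply/negbTE/negP => /Ha; rewrite HK1.
        split; first by [].
        rewrite EBU nb1 in Hb'.
        case Hb0: (bad s2 K s0); move: Hb'.
        + case: (tU s2 K t0) => /=; lia.
        + have := Hbad (negbT Hb0). rewrite nb1 => <- /=. lia.
      - move=> E. have := H3 (ltac:(lia)). rewrite HK1 EBU.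
        case Hb0: (bad s2 K s0).
        + case: (bad s2 K s1); case: (tU s2 K t0) => /=; lia.
        + have := Hbad (negbT Hb0). move=> ->. case: (tU s2 K t0) => /=; lia.
Qed.

Lemma ord_eqn (n : nat) (a b : 'I_n) : (a == b) = (nat_of_ord a == nat_of_ord b).
Proof. by []. Qed.

Lemma has2_tv t (x u : 'I_7) : x != u -> has_num t x -> has_num t u ->
  tv t = (minn x u, maxn x u).
Proof.
rewrite /has_num /tv /tlo /thi => Hxu. case: t => [[a b] /= Hab].
rewrite !ord_eqn in Hxu *.
move=> /orP[/eqP Ea|/eqP Eb] /orP[/eqP Ea'|/eqP Eb']; congr pair; lia.
Qed.

Lemma has2_uniq t t' (x u : 'I_7) : x != u -> has_num t x -> has_num t u ->
  has_num t' x -> has_num t' u -> t = t'.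
Proof. move=> H1 H2 H3 H4 H5. apply: tv_inj. by rewrite (has2_tv H1 H2 H3) (has2_tv H1 H4 H5). Qed.

Lemma tile_xu (x u : 'I_7) : exists t, has_num t x && has_num t u.
Proof.
have [t Ht] : exists t, tv t = (minn x u, maxn x u).
  apply: tile_exists; [lia | have := ltn_ord x; have := ltn_ord u; lia].
exists t. move: Ht; rewrite /tv /has_num !ord_eqn => [[E1 E2]].
rewrite E1 E2. apply/andP; split; apply/orP; lia.
Qed.

Lemma mult_sum (v : 'I_7) : \sum_(t : tile) mult t v = 8.
Proof.
transitivity (lsum tl (fun p : nat * nat => (p.1 == nat_of_ord v) + (p.2 == nat_of_ord v))).
  exact: (sum_tiles (fun p : nat * nat => (p.1 == nat_of_ord v) + (p.2 == nat_of_ord v))).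
case: v => [[|[|[|[|[|[|[|v]]]]]]] Hv] //.
Qed.

Lemma blocked_ends f : Par f -> blocked f -> ~ someone_out f ->
  exists x : 'I_7, ends f = Some (x, x) /\ (forall t, has_num t x -> owner f t = None) /\
   (forall u : 'I_7, u != x -> exists t, [/\ owner f t = None, has_num t u & ~~ has_num t x]).
Proof.
move=> HP Hbl Hso.
have Hfree : forall t, placeable f t -> owner f t = None.
  move=> t Hp. case Ho: (owner f t) => [q|] //. exfalso. move/negP: (Hbl q); apply.
  apply/existsP; exists t. by rewrite /holds Ho eqxx Hp.
case E: (ends f) => [[l r]|]; last first.
  exfalso; apply: Hso; exists ord0 => t. apply/negP => /eqP Ho.
  by move: (Hfree t); rewrite /placeable E Ho => /(_ isT).
have Hl : forall t, has_num t l -> owner f t = None.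
  by move=> t Ht; apply: Hfree; rewrite /placeable E Ht.
have Hbs : forall v : 'I_7, (forall t, has_num t v -> owner f t = None) ->
    bsum f (fun t => mult t v) = 8.
  move=> v Hv. rewrite -(mult_sum v) /bsum big_mkcond /=. apply: eq_bigr => t _.
  case Ho: (owner f t) => [q|] //=. case Hn: (has_num t v); first by rewrite Hv in Ho.
  by move: Hn; rewrite /has_num /mult; case: (tlo t == v); case: (thi t == v).
have Erl : r = l.
  apply/eqP; move: (HP l); rewrite /endc E (Hbs l Hl) eqxx.
  by case: (r == l).
subst r. exists l. split => //. split => // u Hul.
move: (HP u); rewrite /endc E eq_sym (negbTE Hul) /= addn0.
move=> Hev.
case: (boolP [exists t, [&& owner f t == None, has_num t u & ~~ has_num t l]]) =>
  [/existsP [t /and3P [/eqP ? ? ?]] | Hno]; first by exists t.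
exfalso; move: Hev; apply/negP; rewrite negbK.
have [e /andP [Hex Heu]] := tile_xu l u.
have -> : bsum f (fun t => mult t u) = \sum_(t : tile) (t == e).
  rewrite /bsum big_mkcond /=. apply: eq_bigr => t _.
  case: (t =P e) => [-> | Hte]; first by rewrite (Hl _ Hex) /= /mult; move: Hex Heu Hul;
    rewrite /has_num !ord_eqn; lia.
  case Ho: (owner f t) => [q|] //=.
  case Hn: (has_num t u).
    case Hx: (has_num t l).
      by exfalso; apply: Hte; apply: (has2_uniq (x := l) (u := u)) => //; rewrite eq_sym.
    by exfalso; move/negP: Hno; apply; apply/existsP; exists t; rewrite Ho Hn Hx.
  by move: Hn; rewrite /has_num /mult; case: (tlo t == u); case: (thi t == u).
by rewrite addn0 (bigD1 e) //= eqxx big1 // => t /negbTE ->.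
Qed.

Definition qa (K : bool) : 'I_4 := inord K.
Definition qb (K : bool) : 'I_4 := inord (K + 2).
Lemma qa_val K : nat_of_ord (qa K) = K.
Proof. by rewrite /qa inordK //; case: K. Qed.
Lemma qb_val K : nat_of_ord (qb K) = K + 2.
Proof. by rewrite /qb inordK //; case: K. Qed.
Lemma teamK K q : (team q == K) = (q == qa K) || (q == qb K).
Proof. rewrite !ord_eqn qa_val qb_val /team. by case: q => [[|[|[|[|q]]]] Hq]; case: K. Qed.
Lemma qab K : qa K != qb K.
Proof. by rewrite ord_eqn qa_val qb_val; case: K. Qed.

Lemma hand_cap d ms f q : is_deal d -> run (init d) ms f -> #|[set t | owner f t == Some q]| <= 7.
Proof.
move=> Hd Hr. apply: leq_trans (_ : _ <= #|[set t | d t == q]|) _; last by rewrite Hd.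
apply: subset_leq_card. apply/subsetP => t.
rewrite !inE => /eqP /(run_back Hr). by rewrite /init /= ffunE => [[->]].
Qed.

Lemma hk_init d K : is_deal d -> hk K (init d) <= 14.
Proof.
move=> Hd. rewrite /hk /hko.
apply: leq_trans (_ : #|[set t | d t == qa K] :|: [set t | d t == qb K]| <= _).
  apply: subset_leq_card; apply/subsetP => t; by rewrite !inE ffunE /= teamK.
rewrite cardsU. apply: leq_trans (leq_subr _ _) _. by rewrite !Hd.
Qed.

Lemma small12 (H : {set tile}) : #|H| <= 12 -> \sum_(t in H) pips t <= 106.
Proof.
move=> HH. have := thresh H (fun _ => true) 7.
have -> : \sum_(t : tile) (if true then pips t - 7 else 0) = 22.
  transitivity (lsum tl (fun p : nat * nat => p.1 + p.2 - 7)); last by [].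
  exact: (sum_tiles (fun p : nat * nat => p.1 + p.2 - 7)).
have -> : \sum_(t in H | true) 1 = #|H| by rewrite -sum1_card; apply: eq_bigl => t; rewrite andbT.
have -> : \sum_(t in H | true) pips t = \sum_(t in H) pips t by apply: eq_bigl => t; rewrite andbT.
move=> Hle. apply: leq_trans Hle _. lia.
Qed.

Lemma tU_of f K t u : has_num t u -> inU f K u -> tU f K t.
Proof. rewrite /has_num /tU => /orP [/eqP -> -> | /eqP -> ->] //. by rewrite orbT. Qed.

Lemma card4 (T : finType) (a b c e : T) :
  a != b -> a != c -> a != e -> b != c -> b != e -> c != e -> #|a |: (b |: (c |: [set e]))| = 4.
Proof.
move=> ab ac ae bc be ce.
rewrite !cardsU1 cards1 !inE !negb_or ab ac ae bc be ce. by [].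
Qed.

Lemma cls_A (c : nat -> nat) (p : nat * nat) :
  (c p.1 == 1) || (c p.1 == 3) -> (c p.2 == 1) || (c p.2 == 3) ->
  ((c p.1 == 3) && (c p.2 == 3) -> p.1 == p.2) -> cls c 0 p || cls c 2 p.
Proof.
rewrite /cls. case: p => a b /=.
case: (c a) => [|[|[|[|n1]]]]; case: (c b) => [|[|[|[|n2]]]] //= _ _; by move=> /(_ isT) ->.
Qed.

Lemma cls_B (c : nat -> nat) (p : nat * nat) :
  (c p.1 == 2) || (c p.1 == 3) -> (c p.2 == 2) || (c p.2 == 3) ->
  ((c p.1 == 3) && (c p.2 == 3) -> p.1 == p.2) -> cls c 1 p || cls c 2 p.
Proof.
rewrite /cls. case: p => a b /=.
case: (c a) => [|[|[|[|n1]]]]; case: (c b) => [|[|[|[|n2]]]] //= _ _; by move=> /(_ isT) ->.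
Qed.

Lemma inU_AB f K u : inU f K u =
  [exists t, (owner f t == Some (qa K)) && has_num t u] &&
  [exists t, (owner f t == Some (qb K)) && has_num t u].
Proof.
apply/forallP/andP.
- move=> H; split; [move: (H (qa K)) | move: (H (qb K))]; by rewrite teamK eqxx ?orbT.
- move=> [Ha Hb] q; apply/implyP; rewrite teamK => /orP [/eqP -> | /eqP ->] //.
Qed.

Lemma minmax_inj (x a b : nat) : x != a -> x != b -> minn x a = minn x b -> maxn x a = maxn x b -> a = b.
Proof. lia. Qed.

Lemma team_bound d ms f K : is_deal d -> run (init d) ms f -> ends_in_tranca f -> team_pips f K <= 107.
Proof.
move=> Hd Hr [Hbl Hso].
have HP := run_par Hr (par_init d).
have [x [Hends [Hx Hcov]]] := blocked_ends HP Hbl Hso.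
set A := [set t | owner f t == Some (qa K)].
set B := [set t | owner f t == Some (qb K)].
have HAB : [disjoint A & B].
  rewrite -setI_eq0; apply/eqP/setP => t; rewrite !inE.
  case: (owner f t) => [q|] //=. apply/negbTE/negP => /andP [/eqP [E1] /eqP [E2]].
  by move: (qab K); rewrite -E1 E2 eqxx.
have Etp : team_pips f K = \sum_(t in A :|: B) pips t.
  rewrite /team_pips; apply: eq_bigl => t; rewrite !inE; case: (owner f t) => [q|] //=.
  by rewrite teamK.
have EAB : #|A :|: B| = #|A| + #|B| by rewrite cardsU (disjoint_setI0 HAB) cards0 subn0.
have Ehk : hk K f = #|A| + #|B|.
  rewrite -EAB /hk /hko. apply: eq_card => t. rewrite !inE.
  case: (owner f t) => [q|] //=. by rewrite teamK.
have capA : #|A| <= 7 := hand_cap (qa K) Hd Hr.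
have capB : #|B| <= 7 := hand_cap (qb K) Hd Hr.
rewrite Etp.
case: (leqP (#|A| + #|B|) 12) => Hsmall.
  apply: leq_trans (small12 _) _ => //. by rewrite EAB.
have [H1 [H2 H3]] := L4 K Hr Hbl.
have Hbad0 : bad f K (init d) = false by [].
have HBU0 : BU f K (init d) = 0.
  apply/eqP; rewrite /BU /buo cards_eq0; apply/eqP/setP => t; by rewrite !inE ffunE.
have Hhi := hk_init K Hd.
rewrite Hbad0 HBU0 /= in H2 H3.
have HBU3 : BU f K f <= 3.
  have : hk K (init d) = hk K f \/ hk K (init d) = (hk K f).+1 by lia.
  case=> [/H2 [_ H] | /H3 H]; lia.
have HBU14 : #|A| + #|B| = 14 -> BU f K f = 0.
  move=> E14. have E : hk K (init d) = hk K f by lia.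
  by have [_ Hle] := H2 E; apply/eqP; rewrite -leqn0.
have HnA : forall t, t \in A -> ~~ has_num t x.
  move=> t; rewrite inE => /eqP Ho; apply/negP => /Hx; by rewrite Ho.
have HnB : forall t, t \in B -> ~~ has_num t x.
  move=> t; rewrite inE => /eqP Ho; apply/negP => /Hx; by rewrite Ho.
have U1 : forall u, inU f K u -> u != x.
  move=> u; rewrite inU_AB => /andP [/existsP [t /andP [Ht Hu]] _].
  apply/negP => /eqP Eu; subst u. by move: (HnA t); rewrite inE Ht Hu => /(_ isT).
have BUsub : forall t, owner f t = None -> (exists u, has_num t u && inU f K u) -> (owner f t == None) && tU f K t.
  move=> t Ho [u /andP [Hu Hi]]. by rewrite Ho eqxx (tU_of Hu Hi).
have U3 : #|A| + #|B| = 14 -> forall u, ~~ inU f K u.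
  move=> E14 u; apply/negP => Hu.
  have [e /andP [Hex Heu]] := tile_xu x u.
  have := HBU14 E14. rewrite /BU /buo => /eqP; rewrite cards_eq0 => /eqP /setP /(_ e).
  by rewrite inE in_set0 (Hx _ Hex) eqxx (tU_of Heu Hu).
have U2 : forall u1 u2, inU f K u1 -> inU f K u2 -> u1 != u2 ->
    forall t, has_num t u1 -> has_num t u2 -> owner f t = None.
  move=> u1 u2 Hu1 Hu2 H12 t Ht1 Ht2.
  have Hx1 := U1 _ Hu1. have Hx2 := U1 _ Hu2.
  have [e1 /andP [He1x He1u]] := tile_xu x u1.
  have [e2 /andP [He2x He2u]] := tile_xu x u2.
  have [t1 [Hb1 Hu1' Hn1]] := Hcov u1 Hx1.
  have [t2 [Hb2 Hu2' Hn2]] := Hcov u2 Hx2.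
  case: (t1 =P t2) => [E12 | N12].
    subst t2. by rewrite (has2_uniq H12 Ht1 Ht2 Hu1' Hu2').
  exfalso.
  have ne12 : e1 != e2.
    apply/eqP => E; subst e2.
    have Hx1' : x != u1 by rewrite eq_sym.
    have Hx2' : x != u2 by rewrite eq_sym.
    have := has2_tv Hx1' He1x He1u. rewrite (has2_tv Hx2' He1x He2u) => [[Emin Emax]].
    move/negP: H12; apply; rewrite ord_eqn; apply/eqP.
    by apply: (minmax_inj (x := x)) => //; rewrite -ord_eqn.
  have net : forall e t', has_num e x -> ~~ has_num t' x -> e != t'.
    by move=> e t' H H'; apply/eqP => E; subst; rewrite H in H'.
  have : #|e1 |: (e2 |: (t1 |: [set t2]))| <= 3.
    apply: leq_trans HBU3. apply: subset_leq_card. apply/subsetP => y.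
    rewrite !inE => /or4P [] /eqP ->; apply: BUsub.
    - exact: Hx. - by exists u1; rewrite He1u Hu1.
    - exact: Hx. - by exists u2; rewrite He2u Hu2.
    - exact: Hb1. - by exists u1; rewrite Hu1' Hu1.
    - exact: Hb2. - by exists u2; rewrite Hu2' Hu2.
  rewrite card4 //; try by apply: net.
  by apply/eqP.
set inSb := fun u : 'I_7 => [exists t, (owner f t == Some (qb K)) && has_num t u].
set inSa := fun u : 'I_7 => [exists t, (owner f t == Some (qa K)) && has_num t u].
have EU : forall u, inU f K u = inSa u && inSb u := fun u => inU_AB f K u.
pose cf (v : 'I_7) : nat := if v == x then 0 else if inU f K v then 3 else if inSb v then 2 else 1.
pose cfun (n : nat) : nat := if n < 7 then cf (inord n) else 0.
pose l := [seq cfun n | n <- iota 0 7].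
have Hnth : forall v : 'I_7, nth 0 l v = cf v.
  move=> v. rewrite /l (nth_map 0) ?size_iota ?ltn_ord // nth_iota ?ltn_ord // add0n /cfun ltn_ord.
  by rewrite inord_val.
have has_lo : forall t, has_num t (tlo t) by move=> t; rewrite /has_num eqxx.
have has_hi : forall t, has_num t (thi t) by move=> t; rewrite /has_num eqxx orbT.
have Hdbl : forall t, owner f t != None -> inU f K (tlo t) -> inU f K (thi t) ->
    nat_of_ord (tlo t) == nat_of_ord (thi t).
  move=> t Ho H1' H2'. rewrite -ord_eqn. apply/negPn/negP => Hne.
  by move: Ho; rewrite (U2 _ _ H1' H2' Hne t (has_lo t) (has_hi t)).
apply: (combo (l := l) (Ha := A) (Hb := B)).
- by rewrite size_map size_iota.
- apply/allP => n /mapP [m _ ->]. rewrite /cfun; case: (m < 7) => //.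
  rewrite /cf; case: (_ == x) => //; case: (inU f K _) => //; by case: (inSb _).
- rewrite count_map. transitivity (count (pred1 (nat_of_ord x)) (iota 0 7)).
    apply: eq_in_count => n; rewrite mem_iota add0n => /andP [_ Hn] /=. rewrite /cfun Hn /cf.
    have -> : (inord n == x) = (n == x) by rewrite ord_eqn inordK.
    case: (n == x) => //; case: (inU f K _) => //; by case: (inSb _).
  by rewrite count_uniq_mem ?iota_uniq // mem_iota ltn_ord.
- exact: HAB.
- move=> t Ht.
  have Hv : forall v, has_num t v -> cf v = if inU f K v then 3 else 1.
    move=> v Htv. have Hvx : (v == x) = false.
      apply/negbTE/negP => /eqP Ev; subst v. by move: (HnA t Ht); rewrite Htv.
    have Hsa : inSa v by apply/existsP; exists t; move: Ht; rewrite inE => ->.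
    rewrite /cf Hvx EU Hsa /=. by case: (inSb v).
  apply: cls_A; rewrite /= !Hnth ?(Hv _ (has_lo t)) ?(Hv _ (has_hi t)).
  + by case: (inU f K _).
  + by case: (inU f K _).
  + case E1: (inU f K (tlo t)); case E2: (inU f K (thi t)) => //= _.
    apply: Hdbl => //. by move: Ht; rewrite inE => /eqP ->.
- move=> t Ht.
  have Hv : forall v, has_num t v -> cf v = if inU f K v then 3 else 2.
    move=> v Htv. have Hvx : (v == x) = false.
      apply/negbTE/negP => /eqP Ev; subst v. by move: (HnB t Ht); rewrite Htv.
    have Hsb : inSb v by apply/existsP; exists t; move: Ht; rewrite inE => ->.
    rewrite /cf Hvx Hsb. by case: (inU f K v).
  apply: cls_B; rewrite /= !Hnth ?(Hv _ (has_lo t)) ?(Hv _ (has_hi t)).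
  + by case: (inU f K _).
  + by case: (inU f K _).
  + case E1: (inU f K (tlo t)); case E2: (inU f K (thi t)) => //= _.
    apply: Hdbl => //. by move: Ht; rewrite inE => /eqP ->.
- exact: capA.
- exact: capB.
- case E14 : (#|A| + #|B| == 14).
    have Hno3 : 3 \notin l.
      apply/mapP => [[n Hn]]. rewrite mem_iota add0n in Hn. move/andP: Hn => [_ Hn].
      rewrite /cfun Hn /cf. case: (_ == x) => //.
      case Hu: (inU f K _) => //; first by move: (U3 (eqP E14) (inord n)); rewrite Hu.
      by case: (inSb _).
    rewrite Hno3 (eqP E14). by [].
  move/negbT: E14 => E14. have : #|A| + #|B| <= 14 by lia.
  rewrite leq_eqVlt (negbTE E14) /= ltnS => H. apply: leq_trans H _. by rewrite leq_addr.
Qed.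

Record cst := CS { cown : nat -> nat -> nat; cends : option (nat * nat); cturn : nat }.
Definition code (k : nat) : option 'I_4 := if k < 4 then Some (inord k) else None.
Definition toSt (c : cst) : state :=
  St [ffun t => code (cown c (tlo t) (thi t))]
     (omap (fun p : nat * nat => ((inord p.1 : 'I_7), (inord p.2 : 'I_7))) (cends c)) (inord (cturn c)).
Definition cplaceable (e : option (nat * nat)) (ab : nat * nat) : bool :=
  if e is Some (l, r) then [|| ab.1 == l, ab.2 == l, ab.1 == r | ab.2 == r] else true.
Definition ccan (c : cst) (p : nat) : bool :=
  has (fun ab : nat * nat => (cown c ab.1 ab.2 == p) && cplaceable (cends c) ab) tl.
Definition cout (c : cst) : bool :=
  has (fun p => all (fun ab : nat * nat => cown c ab.1 ab.2 != p) tl) (iota 0 4).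
Definition cblocked c := all (fun p => ~~ ccan c p) (iota 0 4).
Definition cwf c := (cturn c < 4) && (if cends c is Some (l, r) then (l < 7) && (r < 7) else true).
Inductive cmove := CPass | CPlay of nat & nat & bool.
Definition cother (ab : nat * nat) (v : nat) := if ab.1 == v then ab.2 else ab.1.
Definition cstep (c : cst) (m : cmove) : option cst :=
  let tn := cturn c in let tn' := (tn.+1) %% 4 in
  match m with
  | CPass => if ~~ ccan c tn then Some (CS (cown c) (cends c) tn') else None
  | CPlay a b side =>
     if [&& a <= b, b < 7 & cown c a b == tn] then
       let own' := fun x y => if (x == a) && (y == b) then 4 else cown c x y in
       match cends c with
       | None => Some (CS own' (Some (a, b)) tn')
       | Some (l, r) =>
         if side then (if (a == l) || (b == l) then Some (CS own' (Some (cother (a, b) l, r)) tn') else None)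
         else (if (a == r) || (b == r) then Some (CS own' (Some (l, cother (a, b) r)) tn') else None)
       end
     else None
  end.
Fixpoint cexec (c : cst) (ms : seq cmove) : option cst :=
  match ms with
  | [::] => Some c
  | m :: ms' => if cwf c && ~~ (cout c || cblocked c) then
                  (if cstep c m is Some c1 then cexec c1 ms' else None) else None
  end.

Definition t00 : tile := exist _ (ord0, ord0) (leqnn 0).
Definition mkT (a b : nat) : tile := odflt t00 (insub ((inord a, inord b) : 'I_7 * 'I_7)).
Lemma tv_mkT a b : a <= b -> b < 7 -> tv (mkT a b) = (a, b).
Proof.
move=> Hab Hb.
have H : ((inord a, inord b) : 'I_7 * 'I_7).1 <= ((inord a, inord b) : 'I_7 * 'I_7).2.
  rewrite /= !inordK //; lia.
rewrite /mkT; case: insubP => [u _ Eu | /negP //] /=.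
by rewrite /tv /tlo /thi Eu /= !inordK //; lia.
Qed.
Definition tomove (m : cmove) : move :=
  if m is CPlay a b side then Play (mkT a b) side else Pass.

Lemma code_lt k : k < 4 -> code k = Some (inord k).
Proof. by rewrite /code => ->. Qed.

Lemma code_eq k (p : 'I_4) : (code k == Some p) = (k == p).
Proof.
rewrite /code. case: ifP => Hk /=.
- apply/eqP/eqP => [[<-] | ->]; [by rewrite inordK | by rewrite inord_val].
- apply/esym/negbTE/negP => /eqP E. by move: (ltn_ord p); rewrite -E Hk.
Qed.

Lemma tile_of (ab : nat * nat) : ab \in tl -> exists t, tv t = ab.
Proof. case: ab => a b; rewrite mem_tl /= => /andP [H1 H2]. exact: tile_exists. Qed.

Lemma ord7 (l : nat) (v : 'I_7) : l < 7 -> ((inord l : 'I_7) == v) = (l == v).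
Proof. by move=> Hl; rewrite ord_eqn inordK. Qed.

Lemma cplaceable_ok c t : cwf c -> placeable (toSt c) t = cplaceable (cends c) (tv t).
Proof.
rewrite /cwf /placeable /toSt /=. case: (cends c) => [[l r]|] //= /andP [_ /andP [Hl Hr]].
by rewrite /has_num !(eq_sym _ (inord _)) !ord7 // /tv /= !(eq_sym l) !(eq_sym r) -!orbA;
  congr (_ || _); rewrite orbCA.
Qed.

Lemma holds_ok c (p : 'I_4) t : holds (toSt c) p t = (cown c (tv t).1 (tv t).2 == p).
Proof. by rewrite /holds /toSt /= ffunE code_eq. Qed.

Lemma can_ok c (p : 'I_4) : cwf c -> can_play (toSt c) p = ccan c p.
Proof.
move=> Hwf. apply/existsP/hasP.
- move=> [t /andP [Hh Hp]]. exists (tv t); first exact: tv_in_tl.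
  by rewrite -holds_ok Hh -cplaceable_ok.
- move=> [ab Hab /andP [Ho Hp]]. have [t Ht] := tile_of Hab. exists t.
  by rewrite holds_ok cplaceable_ok // Ht Ho Hp.
Qed.

Lemma out_ok c : someone_out (toSt c) -> cout c.
Proof.
move=> [p Hp]. apply/hasP; exists (nat_of_ord p); first by rewrite mem_iota ltn_ord.
apply/allP => ab Hab. have [t Ht] := tile_of Hab. move: (Hp t). by rewrite holds_ok Ht.
Qed.

Lemma blocked_ok c : cwf c -> blocked (toSt c) -> cblocked c.
Proof.
move=> Hwf Hb. apply/allP => p; rewrite mem_iota add0n => /andP [_ Hp].
move: (Hb (inord p)). by rewrite can_ok // inordK.
Qed.

Lemma blocked_ok2 c : cwf c -> cblocked c -> blocked (toSt c).
Proof.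
move=> Hwf /allP Hb p. rewrite can_ok //. apply: Hb. by rewrite mem_iota ltn_ord.
Qed.

Lemma notout_ok c : ~~ cout c -> ~ someone_out (toSt c).
Proof. by move=> H /out_ok; apply/negP. Qed.

Lemma next_inord tn : tn < 4 -> Defs.next (inord tn) = inord (tn.+1 %% 4).
Proof. by move=> H; rewrite /Defs.next inordK. Qed.

Lemma tlo_eq t a b : tv t = (a, b) -> tlo t = inord a.
Proof. case=> <- _. by rewrite inord_val. Qed.
Lemma thi_eq t a b : tv t = (a, b) -> thi t = inord b.
Proof. case=> _ <-. by rewrite inord_val. Qed.

Lemma own_rem c t0 a b : tv t0 = (a, b) ->
  [ffun t => code ((fun x y => if (x == a) && (y == b) then 4 else cown c x y) (tlo t) (thi t))]
  = remove_tile (toSt c) t0.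
Proof.
move=> Ht. apply/ffunP => u; rewrite !ffunE /=.
have -> : (u == t0) = (nat_of_ord (tlo u) == a) && (nat_of_ord (thi u) == b).
  by rewrite -(inj_eq tv_inj) Ht.
by case: ifP.
Qed.

Lemma cstep_ok c m c1 : cwf c -> cstep c m = Some c1 -> step (toSt c) (tomove m) (toSt c1).
Proof.
move=> Hwf. move: (Hwf); rewrite /cwf => /andP [Htn He].
case: m => [|a b side] /=.
- case: ifP => // Hc [<-].
  have -> : toSt (CS (cown c) (cends c) ((cturn c).+1 %% 4)) =
            St (owner (toSt c)) (ends (toSt c)) (Defs.next (turn (toSt c))).
    by rewrite /toSt /= next_inord.
  apply: step_pass. by rewrite /= can_ok // inordK.
- case: ifP => // /and3P [Hab Hb Ho].
  have Ht := tv_mkT Hab Hb. set t0 := mkT a b in Ht *.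
  have Hh : holds (toSt c) (turn (toSt c)) t0 by rewrite holds_ok Ht /= inordK //.
  have Ha7 : a < 7 by lia.
  case E: (cends c) He => [[l r]|] He.
  + move/andP: He => [Hl Hr].
    have Eo : forall v, v < 7 -> other t0 (inord v) = inord (cother (a, b) v).
      move=> v Hv. rewrite /other /cother (tlo_eq Ht) (thi_eq Ht) /=.
      rewrite ord_eqn !inordK //. by case: ifP.
    have Hn : forall v, v < 7 -> (a == v) || (b == v) -> has_num t0 (inord v).
      move=> v Hv. by rewrite /has_num (tlo_eq Ht) (thi_eq Ht) !ord_eqn !inordK.
    case: side.
    * case: ifP => // Hlv [<-].
      have -> : toSt (CS (fun x y => if (x == a) && (y == b) then 4 else cown c x y)
                  (Some (cother (a, b) l, r)) ((cturn c).+1 %% 4)) =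
                St (remove_tile (toSt c) t0) (Some (other t0 (inord l), inord r)) (Defs.next (turn (toSt c))).
        by rewrite /toSt /= (own_rem c Ht) next_inord // Eo.
      apply: step_left => //; first by rewrite /toSt /= E.
      exact: Hn.
    * case: ifP => // Hrv [<-].
      have -> : toSt (CS (fun x y => if (x == a) && (y == b) then 4 else cown c x y)
                  (Some (l, cother (a, b) r)) ((cturn c).+1 %% 4)) =
                St (remove_tile (toSt c) t0) (Some (inord l, other t0 (inord r))) (Defs.next (turn (toSt c))).
        by rewrite /toSt /= (own_rem c Ht) next_inord // Eo.
      apply: step_right => //; first by rewrite /toSt /= E.
      exact: Hn.
  + move=> [<-].
    have -> : toSt (CS (fun x y => if (x == a) && (y == b) then 4 else cown c x y)
                  (Some (a, b)) ((cturn c).+1 %% 4)) =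
              St (remove_tile (toSt c) t0) (Some (tlo t0, thi t0)) (Defs.next (turn (toSt c))).
      by rewrite /toSt /= (own_rem c Ht) next_inord // (tlo_eq Ht) (thi_eq Ht).
    apply: step_start => //. by rewrite /toSt /= E.
Qed.

Lemma cexec_ok ms c c' : cexec c ms = Some c' -> run (toSt c) (map tomove ms) (toSt c').
Proof.
elim: ms c => [|m ms IH] c /=; first by move=> [->]; apply: run_nil.
case: ifP => // /andP [Hwf Hgo].
case E: (cstep c m) => [c1|] // /IH Hr.
apply: run_cons Hr; last exact: cstep_ok.
move=> [/out_ok Ho | /(blocked_ok Hwf) Hb]; move: Hgo; [by rewrite Ho | by rewrite Hb orbT].
Qed.

Definition DD (a b : nat) : nat :=
  if (a, b) \in [:: (0,0); (1,3); (0,2); (0,4); (0,6); (1,1); (1,2)] then 0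
  else if (a, b) \in [:: (0,3); (0,1); (2,4); (0,5); (1,4); (2,2); (2,3)] then 2
  else if (a, b) \in [:: (4,6); (4,5); (3,6); (4,4); (3,5); (3,4); (3,3)] then 1
  else 3.
Lemma DD_lt a b : DD a b < 4.
Proof. rewrite /DD; by repeat case: ifP. Qed.

Definition c0 := CS DD None 0.
Definition dl : {ffun tile -> 'I_4} := [ffun t => inord (DD (tlo t) (thi t))].
Definition cms := [:: CPlay 0 0 true; CPass; CPlay 0 3 true; CPass; CPlay 1 3 true; CPass;
  CPlay 0 1 true; CPass; CPlay 0 2 true; CPass; CPlay 2 4 true; CPass; CPlay 0 4 true; CPass;
  CPlay 0 5 true; CPlay 5 6 true; CPlay 0 6 true].
Definition cf := odflt c0 (cexec c0 cms).

Lemma cexec_cms : cexec c0 cms = Some cf.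
Proof. by vm_compute. Qed.

Lemma init_dl : init dl = toSt c0.
Proof.
rewrite /init /toSt /=. congr St.
- apply/ffunP => t; rewrite !ffunE /code DD_lt. by [].
- by apply: val_inj; rewrite /= inordK.
Qed.

Lemma card_sum (P : pred tile) : #|[set t | P t]| = \sum_(t : tile) (P t : nat).
Proof.
rewrite -sum1_card big_mkcond /=. apply: eq_bigr => t _. rewrite inE. by case: (P t).
Qed.

Lemma deal_ok : is_deal dl.
Proof.
move=> p. rewrite card_sum.
transitivity (lsum tl (fun ab : nat * nat => (DD ab.1 ab.2 == nat_of_ord p) : nat)); last first.
  by case: p => [[|[|[|[|p]]]] Hp]; vm_compute.
rewrite -(sum_tiles (fun ab : nat * nat => (DD ab.1 ab.2 == nat_of_ord p) : nat)).
apply: eq_bigr => t _. by rewrite ffunE ord_eqn inordK ?DD_lt.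
Qed.

Lemma team_pips_c c k : team_pips (toSt c) k =
  lsum tl (fun ab : nat * nat => if cown c ab.1 ab.2 < 4 then
     (if odd (cown c ab.1 ab.2) == k then ab.1 + ab.2 else 0) else 0).
Proof.
rewrite -sum_tiles /team_pips big_mkcond /=. apply: eq_bigr => t _.
rewrite ffunE /code /tv /=. case H: (cown c (tlo t) (thi t) < 4) => /=; last by []. by rewrite /team inordK.
Qed.

Lemma existence : exists (d : {ffun tile -> 'I_4}) (ms : seq move) (s : state),
      is_deal d /\ run (init d) ms s /\ ends_in_tranca s /\ winner_points s = Some 107.
Proof.
exists dl, (map tomove cms), (toSt cf). split; first exact: deal_ok.
split; first by rewrite init_dl; apply: cexec_ok; exact: cexec_cms.
have Hwf : cwf cf by vm_compute.
split.
  split; first by apply: blocked_ok2 => //; vm_compute.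
  by apply: notout_ok; vm_compute.
rewrite /winner_points !team_pips_c. by vm_compute.
Qed.


Theorem mainTheorem1 :
  (exists (d : {ffun tile -> 'I_4}) (ms : seq move) (s : state),
      is_deal d /\ run (init d) ms s /\ ends_in_tranca s /\ winner_points s = Some 107)
  /\
  (forall (d : {ffun tile -> 'I_4}) (ms : seq move) (s : state) (pts : nat),
      is_deal d -> run (init d) ms s -> ends_in_tranca s ->
      winner_points s = Some pts -> pts <= 107).
Proof.
split; first exact: existence.
move=> d ms s pts Hd Hr Ht. rewrite /winner_points.
case: ltnP => H1; first by move=> [<-]; exact: team_bound Hd Hr Ht.
case: ltnP => H2 // [<-]. exact: team_bound Hd Hr Ht.
Qed.
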